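(* Fix $0<\alpha<1/2$. Consider the random binary tree generated by the following process: start from a single root node of depth $0$; each node $\Omega$ of depth $d(\Omega)$ is split into two children independently with probability $p_{split}(\Omega)=\alpha^{d(\Omega)}$, and otherwise becomes a leaf. Let $K$ be the number of leaves of the resulting tree. Then there exist constants $C>0$ and $C_K>0$ such that for all integers $k\ge 2$, $$\mathbb{P}(K>k)\le C\, e^{-C_K\, k\log k}.$$
   Context: $K=(X+1)/2$, where $X$ is the total number of nodes of the tree. *)

(* Defs.v *)
From Stdlib Require Import Reals List.
Import ListNotations.
Open Scope R_scope.

Inductive btree : Type :=
| Leaf : btree
| Node : btree -> btree -> btree.

Fixpoint leaves (t : btree) : nat :=
  match t with
  | Leaf => 1%nat
  | Node l r => (leaves l + leaves r)%nat
  end.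

(** Probability that the splitting process started from a node of depth [d]
    produces exactly the (finite) tree [t]: a node of depth d splits with
    probability alpha^d, independently, otherwise it is a leaf. *)
Fixpoint tree_prob (alpha : R) (d : nat) (t : btree) : R :=
  match t with
  | Leaf => 1 - alpha ^ d
  | Node l r => alpha ^ d * tree_prob alpha (S d) l * tree_prob alpha (S d) r
  end.

(** All binary trees with exactly [n] leaves (each listed once);
    [fuel] bounds the recursion and [fuel = n] suffices. *)
Fixpoint trees_fuel (fuel n : nat) : list btree :=
  match fuel with
  | O => []
  | S f =>
      match n with
      | O => []
      | S O => [Leaf]
      | _ =>
          flat_map (fun i =>
            flat_map (fun l => map (fun r => Node l r) (trees_fuel f (n - i)))
                     (trees_fuel f i))
            (seq 1 (n - 1))
      end
  end.

Definition trees_with_leaves (n : nat) : list btree := trees_fuel n n.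

Definition sumR (l : list R) : R := fold_right Rplus 0 l.

Definition prob_K_le (alpha : R) (k : nat) : R :=
  sumR (map (fun j => sumR (map (tree_prob alpha 0) (trees_with_leaves j)))
            (seq 1 k)).

(** P(K > k) = 1 - P(K <= k) (this also counts the null event of an infinite tree). *)
Definition prob_K_gt (alpha : R) (k : nat) : R := 1 - prob_K_le alpha k.

(* Main.v *)
Require Import Defs.
From Stdlib Require Import Reals Lra Lia Psatz List Arith.
Import ListNotations.
Open Scope R_scope.

Lemma sumR_app l1 l2 : sumR (l1 ++ l2) = sumR l1 + sumR l2.
Proof. induction l1; simpl; [ring | rewrite IHl1; ring]. Qed.

Lemma sumR_map_scal {A} (c : R) (f : A -> R) l :
  sumR (map (fun x => c * f x) l) = c * sumR (map f l).
Proof. induction l; simpl; [ring| rewrite IHl; ring]. Qed.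

Lemma sumR_map_minus {A} (f g : A -> R) l :
  sumR (map (fun x => f x - g x) l) = sumR (map f l) - sumR (map g l).
Proof. induction l; simpl; [ring| rewrite IHl; ring]. Qed.

Lemma sumR_map_ext {A} (f g : A -> R) l :
  (forall x, In x l -> f x = g x) -> sumR (map f l) = sumR (map g l).
Proof. intros H; f_equal; apply map_ext_in; auto. Qed.

Lemma sumR_map_le {A} (f g : A -> R) l :
  (forall x, In x l -> f x <= g x) -> sumR (map f l) <= sumR (map g l).
Proof.
  induction l; simpl; intros H; [lra|].
  assert (f a <= g a) by auto. assert (sumR (map f l) <= sumR (map g l)) by auto. lra.
Qed.

Lemma sumR_map_nonneg {A} (f : A -> R) l :
  (forall x, In x l -> 0 <= f x) -> 0 <= sumR (map f l).
Proof.
  induction l; simpl; intros H; [lra|].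
  assert (0 <= f a) by auto. assert (0 <= sumR (map f l)) by auto. lra.
Qed.

Lemma sumR_flat_map {A B} (f : B -> R) (g : A -> list B) l :
  sumR (map f (flat_map g l)) = sumR (map (fun x => sumR (map f (g x))) l).
Proof. induction l; simpl; [reflexivity | rewrite map_app, sumR_app, IHl; reflexivity]. Qed.

Lemma flat_map_ext_in {A B} (f g : A -> list B) l :
  (forall x, In x l -> f x = g x) -> flat_map f l = flat_map g l.
Proof. induction l; simpl; intros H; [reflexivity|]. rewrite H by auto. f_equal; auto. Qed.

Lemma fuel_unfold f n : trees_fuel (S f) (S (S n)) =
  flat_map (fun i => flat_map (fun l => map (fun r => Node l r) (trees_fuel f (S (S n) - i)))
                     (trees_fuel f i)) (seq 1 (S (S n) - 1)).
Proof. reflexivity. Qed.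

Lemma fuel_S : forall f n, (n <= f)%nat -> trees_fuel (S f) n = trees_fuel f n.
Proof.
  induction f as [|f IH]; intros n Hn.
  - assert (n = 0%nat) by lia; subst; reflexivity.
  - destruct n as [|[|n]]; try reflexivity.
    rewrite !fuel_unfold.
    apply flat_map_ext_in. intros i Hi. apply in_seq in Hi.
    rewrite (IH i) by lia. rewrite (IH (S (S n) - i)%nat) by lia. reflexivity.
Qed.

Lemma fuel_add : forall k f n, (n <= f)%nat -> trees_fuel (k + f) n = trees_fuel f n.
Proof.
  induction k; intros f n Hn; [reflexivity|]. change (S k + f)%nat with (S (k + f)).
  rewrite fuel_S by lia. auto.
Qed.

Lemma fuel_eq : forall f n, (n <= f)%nat -> trees_fuel f n = trees_fuel n n.
Proof.
  intros f n Hn. replace f with ((f - n) + n)%nat by lia. apply fuel_add; lia.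
Qed.

Definition Sd a d n := sumR (map (tree_prob a d) (trees_with_leaves n)).

Lemma S_rec a d n : (2 <= n)%nat ->
  Sd a d n = a^d * sumR (map (fun i => Sd a (S d) i * Sd a (S d) (n - i)) (seq 1 (n-1))).
Proof.
  intros Hn. destruct n as [|[|m]]; try lia.
  unfold Sd, trees_with_leaves. rewrite fuel_unfold.
  rewrite sumR_flat_map, <- sumR_map_scal. apply sumR_map_ext. intros i Hi. apply in_seq in Hi.
  rewrite sumR_flat_map.
  rewrite (fuel_eq (S m) i) by lia.
  rewrite (fuel_eq (S m) (S (S m) - i)) by lia.
  set (L1 := trees_fuel i i). set (L2 := trees_fuel _ (S (S m) - i)).
  transitivity (sumR (map (fun l => (a ^ d * sumR (map (tree_prob a (S d)) L2)) * tree_prob a (S d) l) L1)).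
  - apply sumR_map_ext. intros l _. rewrite map_map. simpl.
    rewrite (sumR_map_scal (a^d * tree_prob a (S d) l)). ring.
  - rewrite sumR_map_scal. ring.
Qed.

Lemma pow_le1 a n : 0 <= a <= 1 -> a ^ n <= 1.
Proof.
  intros Ha. induction n; simpl; [lra|].
  assert (0 <= a ^ n) by (apply pow_le; lra). nra.
Qed.

Lemma tree_prob_nonneg a t : 0 <= a <= 1 -> forall d, 0 <= tree_prob a d t.
Proof.
  intros Ha. induction t; intros d; simpl.
  - pose proof (pow_le1 a d Ha). lra.
  - pose proof (pow_le a d (proj1 Ha)). specialize (IHt1 (S d)). specialize (IHt2 (S d)).
    apply Rmult_le_pos; [apply Rmult_le_pos|]; lra.
Qed.

Lemma Sd_nonneg a d n : 0 <= a <= 1 -> 0 <= Sd a d n.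
Proof.
  intros Ha. unfold Sd. apply sumR_map_nonneg. intros; apply tree_prob_nonneg; auto.
Qed.

Lemma Sd_one a d : Sd a d 1 = 1 - a ^ d.
Proof. unfold Sd, trees_with_leaves. simpl. ring. Qed.

Definition Wd a (w : nat -> R) d n := sumR (map (fun j => Sd a d j * w j) (seq 1 n)).

Lemma sumR_map_single {A} (f : A -> R) x : sumR (map f [x]) = f x.
Proof. simpl. ring. Qed.

Lemma sumR_map_plus {A} (f g : A -> R) l :
  sumR (map (fun x => f x + g x) l) = sumR (map f l) + sumR (map g l).
Proof. induction l; simpl; [ring| rewrite IHl; ring]. Qed.

Lemma tri (h : nat -> nat -> R) n :
  sumR (map (fun j => sumR (map (fun i => h i (j - i)%nat) (seq 1 (j - 1)))) (seq 2 n)) =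
  sumR (map (fun i => sumR (map (fun j => h i j) (seq 1 (S n - i)))) (seq 1 n)).
Proof.
  induction n.
  - reflexivity.
  - rewrite (seq_S n 2), map_app, sumR_app, IHn, sumR_map_single.
    rewrite (seq_S n 1), map_app, sumR_app, sumR_map_single.
    replace (2 + n - 1)%nat with (S n) by lia.
    replace (S (S n) - (1 + n))%nat with 1%nat by lia.
    rewrite (seq_S n 1), map_app, sumR_app, sumR_map_single.
    replace (2 + n - (1 + n))%nat with 1%nat by lia.
    assert (E : sumR (map (fun i => sumR (map (fun j => h i j) (seq 1 (S (S n) - i)))) (seq 1 n)) =
                sumR (map (fun i => sumR (map (fun j => h i j) (seq 1 (S n - i)))) (seq 1 n)) +
                sumR (map (fun i => h i (2 + n - i)%nat) (seq 1 n))).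
    { rewrite <- sumR_map_plus.
      apply sumR_map_ext. intros i Hi. apply in_seq in Hi.
      replace (S (S n) - i)%nat with (S (S n - i)) by lia. rewrite seq_S, map_app, sumR_app, sumR_map_single.
      replace (1 + (S n - i))%nat with (2 + n - i)%nat by lia. reflexivity. }
    rewrite E. simpl (seq 1 1). rewrite sumR_map_single. ring.
Qed.

Lemma sumR_map_cons {A} (f : A -> R) x l : sumR (map f (x :: l)) = f x + sumR (map f l).
Proof. reflexivity. Qed.

Lemma sumR_map_scal_r {A} (c : R) (f : A -> R) l :
  sumR (map (fun x => f x * c) l) = sumR (map f l) * c.
Proof. induction l; simpl; [ring| rewrite IHl; ring]. Qed.

Lemma W_rec a w d m : Wd a w d (S m) = (1 - a^d) * w 1%nat + a^d *
  sumR (map (fun i => sumR (map (fun j => Sd a (S d) i * Sd a (S d) j * w (i+j)%nat)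
                                  (seq 1 (S m - i)))) (seq 1 m)).
Proof.
  unfold Wd. change (seq 1 (S m)) with (1%nat :: seq 2 m).
  rewrite sumR_map_cons, Sd_one. f_equal.
  rewrite <- (tri (fun i j => Sd a (S d) i * Sd a (S d) j * w (i+j)%nat)).
  rewrite <- sumR_map_scal. apply sumR_map_ext. intros j Hj. apply in_seq in Hj.
  rewrite S_rec by lia. rewrite Rmult_assoc. f_equal.
  rewrite Rmult_comm, <- sumR_map_scal. apply sumR_map_ext. intros i Hi. apply in_seq in Hi.
  replace (i + (j - i))%nat with j by lia. ring.
Qed.

Lemma tri_le (h : nat -> nat -> R) m :
  (forall i j, (1 <= i <= m)%nat -> (S m - i < j)%nat -> (j <= m)%nat -> 0 <= h i j) ->
  sumR (map (fun i => sumR (map (fun j => h i j) (seq 1 (S m - i)))) (seq 1 m)) <=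
  sumR (map (fun i => sumR (map (fun j => h i j) (seq 1 m))) (seq 1 m)).
Proof.
  intros H. apply sumR_map_le. intros i Hi. apply in_seq in Hi.
  replace (seq 1 m) with (seq 1 ((S m - i) + (i - 1))) by (f_equal; lia).
  rewrite seq_app, map_app, sumR_app.
  assert (0 <= sumR (map (fun j => h i j) (seq (1 + (S m - i)) (i - 1)))); [|lra].
  apply sumR_map_nonneg. intros j Hj. apply in_seq in Hj. apply H; lia.
Qed.

Lemma sq_sum (u : nat -> R) l :
  sumR (map (fun i => sumR (map (fun j => u i * u j) l)) l) = sumR (map u l) * sumR (map u l).
Proof.
  rewrite <- sumR_map_scal_r. apply sumR_map_ext. intros i _. apply sumR_map_scal.
Qed.

Definition Fd a d n := Wd a (fun _ => 1) d n.
Definition Md a lam d n := Wd a (fun j => lam ^ j) d n.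
Definition phi lam D d := (2*lam)^(Nat.pow 2 (D - d)).

Lemma phi_ge lam D d : 1 <= lam -> 2*lam <= phi lam D d.
Proof.
  intros Hl. unfold phi. rewrite <- (pow_1 (2*lam)) at 1. apply Rle_pow; [lra|].
  pose proof (Nat.pow_nonzero 2 (D - d)). lia.
Qed.

Lemma pow_antimono a m n : 0 <= a <= 1 -> (m <= n)%nat -> a ^ n <= a ^ m.
Proof.
  intros Ha Hmn. replace n with (m + (n - m))%nat by lia. rewrite pow_add.
  pose proof (pow_le1 a (n - m) Ha). pose proof (pow_le a m (proj1 Ha)). nra.
Qed.

Lemma phi_step a lam D d : 0 < a < 1 -> 1 <= lam -> a^D*(4*lam) <= 1 ->
  (1-a^d)*lam + a^d * (phi lam D (S d))^2 <= phi lam D d.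
Proof.
  intros Ha Hl HD. pose proof (pow_le a d (Rlt_le _ _ (proj1 Ha))) as Had.
  pose proof (pow_le1 a d (conj (Rlt_le _ _ (proj1 Ha)) (Rlt_le _ _ (proj2 Ha)))) as Had1.
  destruct (le_lt_dec D d) as [Hle|Hlt].
  - unfold phi. replace (D - d)%nat with 0%nat by lia. replace (D - S d)%nat with 0%nat by lia.
    simpl. pose proof (pow_antimono a D d (conj (Rlt_le _ _ (proj1 Ha)) (Rlt_le _ _ (proj2 Ha))) Hle).
    assert (H1 : a ^ d * (4 * lam) <= 1) by nra.
    assert (H2 : a ^ d * (4 * lam) * lam <= 1 * lam) by (apply Rmult_le_compat_r; lra). nra.
  - assert (E : phi lam D d = (phi lam D (S d))^2).
    { unfold phi. replace (D - d)%nat with (S (D - S d)) by lia.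
      rewrite Nat.pow_succ_r', Nat.mul_comm, pow_mult. reflexivity. }
    rewrite E. pose proof (phi_ge lam D (S d) Hl). set (q := phi lam D (S d)) in *.
    assert (Hq : lam <= q ^ 2) by (simpl; nra).
    assert (0 <= (1 - a ^ d) * (q ^ 2 - lam)) by (apply Rmult_le_pos; lra). nra.
Qed.

Lemma dbl_lin (f g : nat -> nat -> R) c (L : nat -> list nat) l :
  sumR (map (fun i => sumR (map (fun j => f i j - c * g i j) (L i))) l) =
  sumR (map (fun i => sumR (map (fun j => f i j) (L i))) l) -
  c * sumR (map (fun i => sumR (map (fun j => g i j) (L i))) l).
Proof.
  rewrite <- sumR_map_scal, <- sumR_map_minus. apply sumR_map_ext. intros i _.
  rewrite sumR_map_minus, sumR_map_scal. reflexivity.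
Qed.

Lemma Wd_nonneg a w d n : 0 <= a <= 1 -> (forall j, 0 <= w j) -> 0 <= Wd a w d n.
Proof.
  intros Ha Hw. unfold Wd. apply sumR_map_nonneg. intros j _.
  apply Rmult_le_pos; [apply Sd_nonneg; auto| auto].
Qed.

Lemma main_ind a lam D : 0 < a < 1 -> 1 <= lam -> a^D*(4*lam) <= 1 ->
  forall n d, 0 <= 1 - Fd a d n /\ Md a lam d n + lam^(S n) * (1 - Fd a d n) <= phi lam D d.
Proof.
  intros Ha Hl HD. assert (Ha' : 0 <= a <= 1) by lra.
  induction n as [|m IH]; intros d.
  - unfold Fd, Md, Wd. simpl. pose proof (phi_ge lam D d Hl). split; lra.
  - destruct (IH (S d)) as [IH1 IH2].
    set (s := Sd a (S d)).
    set (Fs := Fd a (S d) m) in *. set (Ms := Md a lam (S d) m) in *.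
    set (C1 := sumR (map (fun i => sumR (map (fun j => s i * s j * 1) (seq 1 (S m - i)))) (seq 1 m))).
    set (Cl := sumR (map (fun i => sumR (map (fun j => s i * s j * lam ^ (i + j)) (seq 1 (S m - i)))) (seq 1 m))).
    assert (EF : Fd a d (S m) = (1 - a^d) * 1 + a^d * C1) by (unfold Fd; rewrite W_rec; reflexivity).
    assert (EM : Md a lam d (S m) = (1 - a^d) * lam ^ 1 + a^d * Cl) by (unfold Md; rewrite W_rec; reflexivity).
    assert (snn : forall i, 0 <= s i) by (intros; apply Sd_nonneg; auto).
    assert (Fs0 : 0 <= Fs) by (apply Wd_nonneg; auto; intros; lra).
    assert (Ms0 : 0 <= Ms) by (apply Wd_nonneg; auto; intros; apply pow_le; lra).
    assert (HA : C1 <= Fs * Fs).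
    { unfold C1. eapply Rle_trans. apply tri_le.
      - intros i j _ _ _. rewrite Rmult_1_r. apply Rmult_le_pos; auto.
      - unfold Fs, Fd, Wd. rewrite <- sq_sum. apply Req_le. apply sumR_map_ext; intros; apply sumR_map_ext; intros.
        fold s. ring. }
    assert (HB : Cl - lam ^ (S (S m)) * C1 <= Ms * Ms - lam ^ (S (S m)) * (Fs * Fs)).
    { unfold Cl, C1. rewrite <- dbl_lin. eapply Rle_trans. apply tri_le.
      - intros i j Hi Hj Hj'. pose proof (snn i). pose proof (snn j).
        assert (lam ^ (S (S m)) <= lam ^ (i + j)) by (apply Rle_pow; [lra|lia]).
        assert (0 <= s i * s j) by (apply Rmult_le_pos; auto).
        assert (0 <= s i * s j * (lam ^ (i + j) - lam ^ (S (S m)))) by (apply Rmult_le_pos; lra). lra.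
      - cbv beta. rewrite (dbl_lin (fun i j => s i * s j * lam ^ (i + j)) (fun i j => s i * s j * 1)). apply Req_le. f_equal.
        + unfold Ms, Md, Wd. rewrite <- sq_sum. apply sumR_map_ext; intros; apply sumR_map_ext; intros.
          fold s. rewrite pow_add. ring.
        + f_equal. unfold Fs, Fd, Wd. rewrite <- sq_sum. apply sumR_map_ext; intros; apply sumR_map_ext; intros.
          fold s. ring. }
    assert (HC : lam * Fs <= Ms).
    { unfold Fs, Ms, Fd, Md, Wd. rewrite <- sumR_map_scal. apply sumR_map_le. intros j Hj.
      apply in_seq in Hj. fold s. pose proof (snn j).
      assert (lam ^ 1 <= lam ^ j) by (apply Rle_pow; [lra|lia]). rewrite pow_1 in *. nra. }
    set (P := lam ^ S m) in *.
    assert (EP : lam ^ S (S m) = lam * P) by reflexivity.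
    rewrite EP in HB.
    assert (HP : lam <= P) by (unfold P; rewrite <- (pow_1 lam) at 1; apply Rle_pow; [lra|lia]).
    set (Ts := 1 - Fs) in *.
    assert (Key : Cl + lam * P * (1 - C1) <= (Ms + P * Ts) * (Ms + P * Ts)).
    { assert (h1 : 0 <= (Ms - lam * Fs) * P * Ts) by (apply Rmult_le_pos; [apply Rmult_le_pos|]; lra).
      assert (h2 : 0 <= Ts * Ts * P * (P - lam)) by (apply Rmult_le_pos; [apply Rmult_le_pos|]; nra).
      unfold Ts in *. nra. }
    assert (X0 : 0 <= Ms + P * Ts) by (assert (0 <= P * Ts) by (apply Rmult_le_pos; lra); lra).
    assert (Xq : (Ms + P * Ts) * (Ms + P * Ts) <= phi lam D (S d) ^ 2).
    { replace (phi lam D (S d) ^ 2) with (phi lam D (S d) * phi lam D (S d)) by ring.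
      apply Rmult_le_compat; lra. }
    pose proof (phi_step a lam D d Ha Hl HD).
    pose proof (pow_le a d (proj1 Ha')) as Had.
    rewrite EF, EM, EP. rewrite pow_1. split.
    + assert (Fs <= 1) by (unfold Ts in IH1; lra).
      assert (Fs * Fs <= 1 * 1) by (apply Rmult_le_compat; lra).
      assert (0 <= a ^ d * (1 - C1)) by (apply Rmult_le_pos; lra). lra.
    + assert (a ^ d * (Cl + lam * P * (1 - C1)) <= a ^ d * phi lam D (S d) ^ 2)
        by (apply Rmult_le_compat_l; lra).
      lra.
Qed.

Lemma gt_eq a k : prob_K_gt a k = 1 - Fd a 0 k.
Proof.
  unfold prob_K_gt, prob_K_le, Fd, Wd. f_equal. apply sumR_map_ext. intros; unfold Sd; ring.
Qed.

Lemma tail_bound a lam D k : 0 < a < 1 -> 1 <= lam -> a^D*(4*lam) <= 1 ->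
  prob_K_gt a k * lam ^ (S k) <= phi lam D 0.
Proof.
  intros Ha Hl HD. rewrite gt_eq. destruct (main_ind a lam D Ha Hl HD k 0) as [H1 H2].
  assert (0 <= Md a lam 0 k) by (apply Wd_nonneg; [lra| intros; apply pow_le; lra]). nra.
Qed.

Lemma gt_le1 a k : 0 < a < 1 -> prob_K_gt a k <= 1.
Proof.
  intros Ha. rewrite gt_eq. assert (0 <= Fd a 0 k) by (apply Wd_nonneg; [lra| intros; lra]). lra.
Qed.

Lemma exp_le x y : x <= y -> exp x <= exp y.
Proof. intros [H|H]; [left; apply exp_increasing; auto| subst; lra]. Qed.

Lemma exp_ge1 y : 0 <= y -> 1 <= exp y.
Proof. intros. pose proof (exp_ineq1_le y). lra. Qed.

Theorem corollary2 (alpha : R) (Halpha : 0 < alpha < 1 / 2) :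
  exists C CK : R, 0 < C /\ 0 < CK /\
    forall k : nat, (2 <= k)%nat ->
      prob_K_gt alpha k <= C * exp (- (CK * INR k * ln (INR k))).
Proof.
  exists (exp 100), (/12). split; [apply exp_pos|]. split; [lra|].
  intros k Hk.
  assert (Ha : 0 < alpha < 1) by lra.
  assert (Hk2 : 2 <= INR k) by (replace 2 with (INR 2) by (simpl; ring); apply le_INR; lia).
  assert (Hlnk : 0 < ln (INR k)) by (rewrite <- ln_1; apply ln_increasing; lra).
  assert (Hlnk2 : 1 + ln (INR k) <= INR k).
  { pose proof (exp_ineq1_le (ln (INR k))). rewrite exp_ln in H by lra. lra. }
  rewrite <- exp_plus.
  destruct (lt_dec k 32) as [Hsmall|Hbig].
  - eapply Rle_trans; [apply gt_le1; auto|]. apply exp_ge1.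
    assert (INR k <= 31) by (replace 31 with (INR 31) by (simpl; ring); apply le_INR; lia).
    assert (INR k * ln (INR k) <= 31 * 31) by nra. lra.
  - set (L := Nat.log2 k).
    assert (HL : (5 <= L)%nat) by (replace 5%nat with (Nat.log2 32) by reflexivity; apply Nat.log2_le_mono; lia).
    destruct (Nat.log2_spec k) as [HL1 HL2]; [lia|]. fold L in HL1, HL2.
    set (D := (L - 2)%nat).
    set (N := Nat.pow 2 D).
    assert (EL : Nat.pow 2 L = (N * 4)%nat).
    { unfold N. replace L with (D + 2)%nat at 1 by (unfold D; lia). rewrite Nat.pow_add_r. reflexivity. }
    assert (EL2 : Nat.pow 2 (S L) = (N * 8)%nat) by (rewrite Nat.pow_succ_r', EL; lia).
    assert (HD3 : 3 <= INR D) by (replace 3 with (INR 3) by (simpl; ring); apply le_INR; unfold D; lia).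
    set (b := - ln alpha).
    assert (Hln2 : 0 < ln 2) by (rewrite <- ln_1; apply ln_increasing; lra).
    assert (Hb : ln 2 < b).
    { unfold b. assert (ln alpha < ln (/2)) by (apply ln_increasing; lra).
      rewrite ln_Rinv in H by lra. lra. }
    assert (Hln4 : ln 4 = 2 * ln 2) by (replace 4 with (2 * 2) by ring; rewrite ln_mult by lra; ring).
    set (l := INR D * b - ln 4).
    set (lam := exp l).
    assert (Hll : ln 2 <= l) by (unfold l; nra).
    assert (Hlam2 : 2 <= lam) by (unfold lam; rewrite <- (exp_ln 2) by lra; apply exp_le; lra).
    assert (HaD : alpha ^ D * (4 * lam) <= 1).
    { rewrite <- (exp_ln (alpha ^ D)) by (apply pow_lt; lra).
      rewrite ln_pow by lra. rewrite <- (exp_ln 4) by lra. unfold lam.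
      rewrite <- !exp_plus. unfold l, b. replace (INR D * ln alpha + (ln 4 + (INR D * - ln alpha - ln 4))) with 0 by ring.
      rewrite exp_0. lra. }
    pose proof (tail_bound alpha lam D k Ha ltac:(lra) HaD) as TB.
    unfold phi in TB. replace (D - 0)%nat with D in TB by lia. fold N in TB.
    assert (P1 : (2 * lam) ^ N <= lam ^ (2 * N)).
    { rewrite pow_mult. apply pow_incr. split; [lra|]. simpl. nra. }
    set (r := (S k - 2 * N)%nat).
    assert (Hr : (k <= 2 * r)%nat) by (unfold r; lia).
    assert (Er : lam ^ S k = lam ^ (2 * N) * lam ^ r) by (rewrite <- pow_add; f_equal; unfold r; lia).
    assert (Hpos : 0 < lam ^ (2 * N)) by (apply pow_lt; lra).
    assert (Hpr : 0 < lam ^ r) by (apply pow_lt; lra).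
    assert (B1 : prob_K_gt alpha k * lam ^ r <= 1).
    { rewrite Er in TB. assert (prob_K_gt alpha k * lam ^ r * lam ^ (2 * N) <= 1 * lam ^ (2 * N)) by nra.
      apply Rmult_le_reg_r in H; lra. }
    assert (Elr : lam ^ r = exp (INR r * l)).
    { rewrite <- (exp_ln (lam ^ r)) by lra. rewrite ln_pow by lra. unfold lam. rewrite ln_exp. reflexivity. }
    assert (B2 : prob_K_gt alpha k <= exp (- (INR r * l))).
    { rewrite exp_Ropp, <- Elr. apply (Rmult_le_reg_r (lam ^ r)); auto.
      rewrite Rinv_l by lra. lra. }
    eapply Rle_trans; [exact B2|]. apply exp_le.
    assert (Hkr : INR k <= 2 * INR r) by (replace 2 with (INR 2) by (simpl; ring); rewrite <- mult_INR; apply le_INR; lia).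
    assert (Hlnk3 : ln (INR k) < (INR D + 3) * ln 2).
    { assert (INR k < 2 ^ (S L)).
      { rewrite <- (pow_INR 2). replace (INR 2) with 2 by (simpl; ring) . apply lt_INR. exact HL2. }
      apply ln_increasing in H; [|lra]. rewrite ln_pow in H by lra.
      replace (INR (S L)) with (INR D + 3) in H; [lra|].
      replace (S L) with (D + 3)%nat by (unfold D; lia). rewrite plus_INR. simpl. ring. }
    assert (Hl6 : ln (INR k) / 6 <= l) by (unfold l; nra).
    assert (0 <= l) by lra.
    assert (INR k * (ln (INR k) / 6) <= 2 * INR r * l) by (apply Rmult_le_compat; lra).
    lra.
Qed.
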